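(* Let $m\ge 1$, $n=3m$, and $t\ge 2$. Put $X_t=G_{n,t}\setminus a_{t-1}$ and $Y_t=X_t\setminus a_{t-2}$. Then $I(X_t)\simeq I(Y_t)$.
   Context: For a finite simple graph $G$, $I(G)$ is its independence complex (simplicial complex on $V(G)$ whose simplices are the independent sets); $G\setminus v$ is the induced subgraph on $V(G)\setminus\{v\}$. For integers $n\ge 2$, $t\ge 0$, the graph $G_{n,t}$ has vertex set $\{a_0,\dots,a_t\}\cup\{b_{i,j},c_{i,j}: 1\le i\le t,\ 1\le j\le n-1\}$, and its edges are exactly: $b_{i,j}\sim b_{i,j+1}$ and $c_{i,j}\sim c_{i,j+1}$ for $1\le i\le t$, $1\le j\le n-2$; $b_{i,n-1}\sim b_{i+1,1}$ and $c_{i,n-1}\sim c_{i+1,1}$ for $1\le i\le t-1$; and $a_{i-1}\sim b_{i,1}$, $a_{i-1}\sim c_{i,1}$, $a_i\sim b_{i,n-1}$, $a_i\sim c_{i,n-1}$ for $1\le i\le t$. *)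

(* Defs.v *)
From HB Require Import structures.
From mathcomp Require Import all_boot all_order all_algebra.
From mathcomp Require Import all_classical all_reals.
From mathcomp Require Import topology normedtype.
Import numFieldNormedType.Exports.
Set Implicit Arguments. Unset Strict Implicit. Unset Printing Implicit Defensive.
Import Order.TTheory GRing.Theory Num.Theory.
Local Open Scope classical_set_scope.
Local Open Scope ring_scope.

(* A simple graph on a finite vertex type V is a symmetric irreflexive
   relation; the induced subgraph on S : {set V} is encoded by S itself. *)

(* Independent sets of the induced subgraph G[S] = simplices of I(G[S]). *)
Definition indep_in (V : finType) (adj : rel V) (S : {set V}) (I : {set V}) : bool :=
  (I \subset S) && [forall x in I, forall y in I, ~~ adj x y].

Definition del1 (V : finType) (v : V) : {set V} := [set~ v].
Definition del2 (V : finType) (v w : V) : {set V} := finset (fun x => (x != v) && (x != w)).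

(* a_k (0 <= k <= t)           is  inl k
   b_{i,j} (1<=i<=t,1<=j<=n-1) is  inr (i-1, j-1, false)
   c_{i,j}                     is  inr (i-1, j-1, true)              *)
Definition Gvert (n t : nat) : finType := ('I_t.+1 + ('I_t * 'I_n.-1 * bool))%type.

Definition Gadj0 (n t : nat) (u v : Gvert n t) : bool :=
  match u, v with
  | inr (i, j, c), inr (i2, j2, c2) =>
      (c == c2) &&
      (((val i == val i2) && ((val j).+1 == val j2))
       || (((val i).+1 == val i2) && (val j == n - 2)%N && (val j2 == 0%N)))
  | inl k, inr (i, j, _) =>
      ((val k == val i) && (val j == 0%N)) || ((val k == (val i).+1) && (val j == n - 2)%N)
  | _, _ => false
  end.

Definition Gadj (n t : nat) : rel (Gvert n t) := fun u v => Gadj0 u v || Gadj0 v u.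

Definition avert (n t k : nat) : Gvert n t := inl (inord k).

(* Points of |K| for a simplicial complex K on the finite vertex type V,
   realized in R^V (coordinates indexed by enum_rank): barycentric
   coordinates, nonnegative, summing to 1, with support a simplex of K. *)
Definition coord (R : realType) (V : finType) (x : 'rV[R]_#|V|) (v : V) : R :=
  x ord0 (enum_rank v).

Definition realization (R : realType) (V : finType) (K : pred {set V}) : set 'rV[R]_#|V| :=
  [set x | (forall v, 0 <= coord x v) /\ (\sum_(v : V) coord x v = 1)
           /\ K (finset (fun v => coord x v != 0))].

Definition homotopic_in (R : realType) (U W : topologicalType)
    (A : set U) (B : set W) (f g : U -> W) : Prop :=
  exists H : R * U -> W,
    {within (`[0%R, 1%R] : set R) `*` A, continuous H} /\
    H @` ((`[0%R, 1%R] : set R) `*` A) `<=` B /\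
    (forall x, A x -> H (0, x) = f x /\ H (1, x) = g x).

Definition homotopy_equivalent (R : realType) (U W : topologicalType)
    (A : set U) (B : set W) : Prop :=
  exists (f : U -> W) (g : W -> U),
    {within A, continuous f} /\ f @` A `<=` B /\
    {within B, continuous g} /\ g @` B `<=` A /\
    homotopic_in R A A (g \o f) idfun /\ homotopic_in R B B (f \o g) idfun.

Definition indep_real (R : realType) (V : finType) (adj : rel V) (S : {set V}) :=
  @realization R V (indep_in adj S).
Arguments indep_real R {V} adj S.
Arguments homotopy_equivalent R {U W} A B.
Arguments homotopic_in R {U W} A B f g.

(* Main.v *)
Require Import Defs.
From HB Require Import structures.
From mathcomp Require Import all_boot all_order all_algebra.
From mathcomp Require Import all_classical all_reals.
From mathcomp Require Import topology normedtype.
From mathcomp Require Import lra zify.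
Import numFieldNormedType.Exports.
Set Implicit Arguments. Unset Strict Implicit. Unset Printing Implicit Defensive.
Import Order.TTheory GRing.Theory Num.Theory.
Local Open Scope classical_set_scope.
Local Open Scope ring_scope.

Section Chain.
Variables (R : realType) (E : normedModType R).

Definition SLr (A B : set E) (r : E -> E) :=
  continuous r /\ B `<=` A /\ (forall x, A x -> B (r x)) /\
  (forall x, B x -> r x = x) /\
  (forall x s, A x -> 0 <= s <= 1 -> A ((1 - s) *: r x + s *: x)).

Definition DR (A B : set E) := exists (r : E -> E) (H : R * E -> E),
  continuous r /\ continuous H /\ B `<=` A /\ (forall x, A x -> B (r x)) /\
  (forall x, B x -> r x = x) /\
  (forall s x, 0 <= s <= 1 -> A x -> A (H (s, x))) /\
  (forall x, A x -> H (0, x) = r x /\ H (1, x) = x).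

Lemma continuous_snd : continuous (snd : R * E -> E).
Proof. by move=> [s x]; apply: cvg_snd. Qed.

Lemma continuous_fst : continuous (fst : R * E -> R).
Proof. by move=> [s x]; apply: cvg_fst. Qed.

Lemma DR_refl A : DR A A.
Proof.
exists id, snd; split; first by move=> x; apply: cvg_id.
split; first exact: continuous_snd.
by do 4 (split => //).
Qed.

Definition aa (s : R) : R := Num.min (2 * s) 1.
Definition bb (s : R) : R := Num.max (2 * s - 1) 0.

Lemma aa_cont : continuous aa.
Proof.
move=> s; apply: (@continuous_min R R (fun s => 2 * s) (fun _ => 1)).
  by apply: continuousM => //; apply: cvg_cst.
exact: cvg_cst.
Qed.

Lemma bb_cont : continuous bb.
Proof.
move=> s; apply: (@continuous_max R R (fun s => 2 * s - 1) (fun _ => 0)).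
  apply: continuousB; last exact: cvg_cst.
  by apply: continuousM => //; apply: cvg_cst.
exact: cvg_cst.
Qed.

Lemma DR_step A B C r1 : SLr A B r1 -> DR B C -> DR A C.
Proof.
move=> [r1c [BA [r1B [r1id r1seg]]]] [r2 [H2 [r2c [H2c [CB [r2C [r2id [H2B H2e]]]]]]]].
exists (r2 \o r1).
exists (fun p => (1 - bb p.1) *: H2 (aa p.1, r1 p.2) + bb p.1 *: p.2).
split; first by move=> x; apply: continuous_comp; [exact: r1c | exact: r2c].
split.
  move=> p; apply: cvgD; last first.
    apply: cvgZ; last exact: continuous_snd.
    by apply: continuous_comp; [exact: continuous_fst | exact: bb_cont].
  apply: cvgZ.
    apply: cvgB; first exact: cvg_cst.
    by apply: continuous_comp; [exact: continuous_fst | exact: bb_cont].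
  apply: (@continuous_comp _ _ _ (fun p : R * E => (aa p.1, r1 p.2)) H2); last exact: H2c.
  have h1 : (fun q : R * E => aa q.1) @ p --> aa p.1.
    by apply: continuous_comp; [exact: continuous_fst | exact: aa_cont].
  have h2 : (fun q : R * E => r1 q.2) @ p --> r1 p.2.
    by apply: continuous_comp; [exact: continuous_snd | exact: r1c].
  exact: (cvg_pair h1 h2).
split; first by move=> x /CB /BA.
split; first by move=> x /r1B /r2C.
split; first by move=> x Cx /=; rewrite r1id ?r2id //; exact: CB.
split.
  move=> s x /andP[s0 s1] Ax /=.
  have [hs|hs] := leP s (2^-1).
    have b0 : bb s = 0.
      by rewrite /bb; apply/max_idPr; lra.
    rewrite b0 subr0 scale1r scale0r addr0; apply: BA; apply: H2B; last exact: r1B.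
    rewrite /aa; apply/andP; split.
      by rewrite le_min; apply/andP; split; lra.
    by rewrite ge_min lexx orbT.
  have a1 : aa s = 1.
    rewrite /aa; apply/min_idPr; lra.
  rewrite a1; have [_ ->] := H2e _ (r1B _ Ax).
  apply: r1seg => //; rewrite /bb; apply/andP; split; first by rewrite le_max lexx orbT.
  by rewrite ge_max ler01 andbT; lra.
move=> x Ax /=; split.
  have -> : bb 0 = 0 by rewrite /bb mulr0 add0r; apply/max_idPr; lra.
  have -> : aa 0 = 0 by rewrite /aa mulr0; apply/min_idPl.
  by rewrite subr0 scale1r scale0r addr0; have [-> _] := H2e _ (r1B _ Ax).
have -> : bb 1 = 1 by rewrite /bb mulr1 addrK; apply/max_idPl; lra.
by rewrite subrr scale0r add0r scale1r.
Qed.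

Lemma SL_DR A B r : SLr A B r -> DR A B.
Proof. by move=> h; apply: DR_step h (DR_refl B). Qed.

Lemma DR_he (A B : set E) : DR A B -> homotopy_equivalent R A B.
Proof.
move=> [r [H [rc [Hc [BA [rB [rid [HA He]]]]]]]].
exists r, id.
split; first exact: continuous_subspaceT.
split; first by move=> _ [x Ax <-]; exact: rB.
split; first by apply: continuous_subspaceT => x; apply: cvg_id.
split; first by move=> _ [x Bx <-]; exact: BA.
split.
  exists H; split; first exact: continuous_subspaceT.
  split.
    move=> _ [[s x] [sI Ax] <-].
    by apply: HA => //; move: sI; rewrite /= in_itv.
  by move=> x Ax; have [-> ->] := He x Ax.
exists snd; split; first by apply: continuous_subspaceT; exact: continuous_snd.
split; first by move=> _ [[s x] [_ Bx] <-].
by move=> x Bx /=; rewrite rid.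
Qed.

End Chain.

Local Open Scope ring_scope.

Section Real.
Variables (R : realType) (V : finType).
Local Notation E := 'rV[R]_#|V|.
Local Notation coord := Defs.coord.

Definition supp (x : E) : {set V} := finset (fun v => coord x v != 0).
Definition ev (v : V) : E := \row_(j < #|V|) (j == enum_rank v)%:R.
Definition scoord (x : E) := \sum_(v : V) coord x v.
Definition dclosed (K : pred {set V}) := forall s t : {set V}, K s -> t \subset s -> K t.

Lemma coordD (x y : E) v : coord (x + y) v = coord x v + coord y v.
Proof. by rewrite /coord mxE. Qed.
Lemma coordZ a (x : E) v : coord (a *: x) v = a * coord x v.
Proof. by rewrite /coord mxE. Qed.
Lemma coordN (x : E) v : coord (- x) v = - coord x v.
Proof. by rewrite /coord mxE. Qed.
Lemma coord_ev u v : coord (ev v) u = (u == v)%:R.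
Proof. by rewrite /coord mxE (can_eq enum_rankK). Qed.
Lemma scoordD x y : scoord (x + y) = scoord x + scoord y.
Proof. by rewrite /scoord -big_split; apply: eq_bigr => v _; rewrite coordD. Qed.
Lemma scoordZ a x : scoord (a *: x) = a * scoord x.
Proof. by rewrite /scoord mulr_sumr; apply: eq_bigr => v _; rewrite coordZ. Qed.
Lemma scoordN x : scoord (- x) = - scoord x.
Proof. by rewrite /scoord -sumrN; apply: eq_bigr => v _; rewrite coordN. Qed.
Lemma scoord_ev v : scoord (ev v) = 1.
Proof.
rewrite /scoord (bigD1 v) //= coord_ev eqxx big1 ?addr0 // => u /negbTE uv.
by rewrite coord_ev uv.
Qed.
Lemma in_supp x v : (v \in supp x) = (coord x v != 0).
Proof. by rewrite inE. Qed.

Lemma realP (K : pred {set V}) x :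
  @realization R V K x <-> ((forall v, 0 <= coord x v) /\ scoord x = 1 /\ K (supp x)).
Proof. by []. Qed.

Lemma real_seg (K : pred {set V}) (x y : E) s :
  dclosed K -> (forall v, 0 <= coord x v) -> (forall v, 0 <= coord y v) ->
  scoord x = 1 -> scoord y = 1 -> K (supp x :|: supp y) -> 0 <= s <= 1 ->
  @realization R V K ((1 - s) *: x + s *: y).
Proof.
move=> dK x0 y0 sx sy Kxy /andP[s0 s1]; split.
  by move=> v; rewrite coordD !coordZ addr_ge0 // mulr_ge0 // subr_ge0.
split; first by change (scoord ((1 - s) *: x + s *: y) = 1); rewrite scoordD !scoordZ sx sy !mulr1 subrK.
apply: (dK _ _ Kxy); apply/fintype.subsetP => v; rewrite in_supp inE !in_supp coordD !coordZ.
case: (eqVneq (coord x v) 0) => [->|//]; rewrite mulr0 add0r.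
by case: (eqVneq (coord y v) 0) => [->|//]; rewrite mulr0 eqxx.
Qed.

Lemma move_SL (K L : pred {set V}) (mu : E -> R) (d : E) :
  dclosed K -> (forall s, L s -> K s) -> continuous mu ->
  (forall x, @realization R V K x -> @realization R V L (x + mu x *: d)) ->
  (forall x, @realization R V L x -> mu x = 0) ->
  (forall x, @realization R V K x -> K (supp x :|: supp (x + mu x *: d))) ->
  SLr (@realization R V K) (@realization R V L) (fun x => x + mu x *: d).
Proof.
move=> dK LK muc rL mu0 Kxr.
split.
  move=> x.
  have h1 : (fun y : E => y) @ x --> x by apply: cvg_id.
  have h2 : (fun y => mu y *: d) @ x --> mu x *: d.
    exact: (cvgZ (muc x) (cvg_cst d)).
  exact: (cvgD h1 h2).
split; first by move=> x [x0 [sx Lx]]; split; [|split] => //; apply: LK.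
split; first exact: rL.
split; first by move=> x Lx; rewrite mu0 // scale0r addr0.
move=> x s Kx s01.
have [r0 [sr _]] := rL x Kx.
have [x0 [sx _]] := Kx.
by apply: real_seg => //; rewrite finset.setUC; exact: Kxr.
Qed.


Lemma mu_min_cont (u w : V) : continuous (fun x : E => Num.min (coord x u) (coord x w)).
Proof.
move=> x; apply: (@continuous_min R _ (fun x : E => coord x u) (fun x : E => coord x w)).
  exact: coord_continuous.
exact: coord_continuous.
Qed.

Lemma mu_coord_cont (w : V) : continuous (fun x : E => coord x w).
Proof. move=> x; exact: coord_continuous. Qed.

Section Form1.
Variables (K L : pred {set V}) (u w z : V).
Hypotheses (uw : u != w) (zu : z != u) (zw : z != w).
Hypotheses (dK : dclosed K) (dL : dclosed L) (LK : forall s, L s -> K s).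
Hypothesis H1 : forall s, K s -> u \in s -> w \in s ->
  K (z |: s) /\ L (z |: s :\ u) /\ L (z |: s :\ w).
Hypothesis H2 : forall s, K s -> ~~ ((u \in s) && (w \in s)) -> L s.
Hypothesis H3 : forall s, L s -> ~~ ((u \in s) && (w \in s)).

Let d1 : E := ev z + ev z - ev u - ev w.
Let mu1 (x : E) := Num.min (coord x u) (coord x w).

Lemma coord_r1 (x : E) m v : coord (x + m *: d1) v =
  if v == z then coord x v + 2 * m else if v == u then coord x v - m
  else if v == w then coord x v - m else coord x v.
Proof.
rewrite /d1 coordD coordZ !coordD !coordN !coord_ev.
have [->|vz] := eqVneq v z; first by rewrite (negbTE zu) (negbTE zw) /=; lra.
have [->|vu] := eqVneq v u; first by rewrite (negbTE uw) /=; lra.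
by have [->|vw] := eqVneq v w; rewrite /=; lra.
Qed.

Lemma form1 : SLr (@realization R V K) (@realization R V L) (fun x => x + mu1 x *: d1).
Proof.
have mu_ge0 x : (forall v, 0 <= coord x v) -> 0 <= mu1 x.
  by move=> x0; rewrite /mu1 le_min !x0.
have mu_leu x : mu1 x <= coord x u by rewrite /mu1 ge_min lexx.
have mu_lew x : mu1 x <= coord x w by rewrite /mu1 ge_min lexx orbT.
have mu_eq x : mu1 x = coord x u \/ mu1 x = coord x w.
  by rewrite /mu1; case: leP => _; [left|right].
have sc x : scoord (x + mu1 x *: d1) = scoord x.
  by rewrite scoordD scoordZ /d1 !scoordD !scoordN !scoord_ev; lra.
have suppr x : (forall v, 0 <= coord x v) -> 
   supp (x + mu1 x *: d1) \subset z |: supp x.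
  move=> x0; apply/fintype.subsetP => v; rewrite !inE coord_r1.
  have [//|vz] := eqVneq v z; rewrite orFb.
  have [->|vu] := eqVneq v u.
    by apply: contra_neq => h; have := mu_ge0 x x0; have := mu_leu x; lra.
  have [->|vw] := eqVneq v w => //.
  by apply: contra_neq => h; have := mu_ge0 x x0; have := mu_lew x; lra.
have mupos x : (forall v, 0 <= coord x v) -> mu1 x != 0 -> (u \in supp x) && (w \in supp x).
  move=> x0 m0; have hm := mu_ge0 x x0; have := mu_leu x; have := mu_lew x.
  have mp : 0 < mu1 x by rewrite lt0r m0 hm.
  by rewrite !in_supp => ? ?; apply/andP; split; apply: lt0r_neq0; lra.
apply: move_SL => //.
- exact: mu_min_cont.
- move=> x [x0 [sx Kx]].
  have [m0|m0] := eqVneq (mu1 x) 0.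
    rewrite m0 scale0r addr0; split => //; split => //; apply: H2 => //.
    rewrite !in_supp; case: (mu_eq x) => <-; rewrite m0 eqxx //= andbF //.
  have /andP[us ws] := mupos x x0 m0.
  have [HK [HLu HLw]] := H1 Kx us ws.
  split.
    move=> v; rewrite coord_r1; have := mu_ge0 x x0; have := mu_leu x; have := mu_lew x; have := x0 v.
    have [->|vz] := eqVneq v z; first lra.
    have [->|vu] := eqVneq v u; first lra.
    by have [->|vw] := eqVneq v w; lra.
  split; first by rewrite /scoord -/(scoord _) sc.
  case: (mu_eq x) => me.
    apply: (dL HLu); apply/fintype.subsetP => v vs.
    have := fintype.subsetP (suppr x x0) v vs; move: vs.
    rewrite !inE; have [->|vu] := eqVneq v u => //=.
    by rewrite coord_r1 [u == z]eq_sym (negbTE zu) eqxx me subrr eqxx.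
  apply: (dL HLw); apply/fintype.subsetP => v vs.
  have := fintype.subsetP (suppr x x0) v vs; move: vs.
  rewrite !inE; have [->|vw] := eqVneq v w => //=.
  by rewrite coord_r1 [w == z]eq_sym (negbTE zw) [w == u]eq_sym (negbTE uw) eqxx me subrr eqxx.
- move=> x [x0 [sx Lx]]; have := H3 Lx; rewrite !in_supp negb_and !negbK.
  have := x0 u; have := x0 w; rewrite /mu1.
  by move=> hw hu /orP[/eqP e|/eqP e]; rewrite e; [rewrite min_l | rewrite min_r].
- move=> x [x0 [sx Kx]].
  have [m0|m0] := eqVneq (mu1 x) 0.
    by rewrite m0 scale0r addr0 finset.setUid.
  have /andP[us ws] := mupos x x0 m0.
  have [HK _] := H1 Kx us ws.
  apply: (dK HK); rewrite finset.subUset (suppr x x0) andbT.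
  by apply/fintype.subsetP => v vs; rewrite !inE -in_supp vs orbT.
Qed.

End Form1.


Section Form2.
Variables (K L : pred {set V}) (w z : V).
Hypotheses (zw : z != w).
Hypotheses (dK : dclosed K) (dL : dclosed L) (LK : forall s, L s -> K s).
Hypothesis H1 : forall s, K s -> w \in s -> K (z |: s) /\ L (z |: s :\ w).
Hypothesis H2 : forall s, K s -> w \notin s -> L s.
Hypothesis H3 : forall s, L s -> w \notin s.

Let d2 : E := ev z - ev w.
Let mu2 (x : E) := coord x w.

Lemma coord_r2 (x : E) m v : coord (x + m *: d2) v =
  if v == z then coord x v + m else if v == w then coord x v - m else coord x v.
Proof.
rewrite /d2 coordD coordZ !coordD !coordN !coord_ev.
have [->|vz] := eqVneq v z; first by rewrite (negbTE zw) /=; lra.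
by have [->|vw] := eqVneq v w; rewrite /=; lra.
Qed.

Lemma form2 : SLr (@realization R V K) (@realization R V L) (fun x => x + mu2 x *: d2).
Proof.
have sc x : scoord (x + mu2 x *: d2) = scoord x.
  by rewrite scoordD scoordZ /d2 !scoordD !scoordN !scoord_ev; lra.
have suppr x : supp (x + mu2 x *: d2) \subset z |: (supp x :\ w).
  apply/fintype.subsetP => v; rewrite !inE coord_r2.
  have [//|vz] := eqVneq v z; rewrite orFb.
  have [->|vw] := eqVneq v w; first by rewrite /mu2 subrr eqxx.
  by [].
apply: move_SL => //.
- exact: mu_coord_cont.
- move=> x [x0 [sx Kx]].
  have [m0|m0] := eqVneq (mu2 x) 0.
    rewrite m0 scale0r addr0; split => //; split => //; apply: H2 => //.
    by rewrite in_supp negbK; apply/eqP.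
  have ws : w \in supp x by rewrite in_supp.
  have [HK HL] := H1 Kx ws.
  split.
    move=> v; rewrite coord_r2; have := x0 v; have := x0 w; rewrite /mu2.
    have [->|vz] := eqVneq v z; first lra.
    by have [->|vw] := eqVneq v w; lra.
  split; first by rewrite /scoord -/(scoord _) sc.
  apply: (dL HL); apply: fintype.subset_trans (suppr x) _.
  by apply/fintype.subsetP => v; rewrite !inE.
- move=> x [x0 [sx Lx]]; have := H3 Lx; rewrite !in_supp negbK /mu2.
  by move/eqP.
- move=> x [x0 [sx Kx]].
  have [m0|m0] := eqVneq (mu2 x) 0.
    by rewrite m0 scale0r addr0 finset.setUid.
  have ws : w \in supp x by rewrite in_supp.
  have [HK _] := H1 Kx ws.
  apply: (dK HK); rewrite finset.subUset; apply/andP; split.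
    by apply/fintype.subsetP => v vs; rewrite !inE -in_supp vs orbT.
  apply: fintype.subset_trans (suppr x) _.
  by apply/fintype.subsetP => v; rewrite !inE; case/orP => [->//|/andP[_ ->]]; rewrite orbT.
Qed.

End Form2.

End Real.

Local Open Scope ring_scope.

Section Graph.
Variables (V : finType) (adj : rel V).
Hypothesis adj_sym : forall x y, adj x y = adj y x.
Hypothesis adj_irr : forall x, ~~ adj x x.

Lemma indepP (T s : {set V}) :
  reflect (s \subset T /\ forall x y, x \in s -> y \in s -> ~~ adj x y) (indep_in adj T s).
Proof.
apply: (iffP andP) => [[sT /forallP h]|[sT h]]; split => //.
  by move=> x y xs ys; have /implyP /(_ xs) /forallP /(_ y) /implyP := h x; apply.
by apply/forallP => x; apply/implyP => xs; apply/forallP => y; apply/implyP => ys; apply: h.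
Qed.

Lemma indep_dclosed T : dclosed (indep_in adj T).
Proof.
move=> s t /indepP [sT h] ts; apply/indepP; split.
  exact: fintype.subset_trans ts sT.
by move=> x y xt yt; apply: h; apply: (fintype.subsetP ts).
Qed.

Lemma indep_add (T s : {set V}) z : indep_in adj T s -> z \in T ->
  (forall y, y \in s -> ~~ adj z y) -> indep_in adj T (z |: s).
Proof.
move=> /indepP [sT h] zT hz; apply/indepP; split.
  by apply/fintype.subsetP => x; rewrite !inE => /orP[/eqP->//|]; apply: (fintype.subsetP sT).
move=> x y; rewrite !inE => /orP[/eqP->|xs] /orP[/eqP->|ys].
- exact: adj_irr.
- exact: hz.
- by rewrite adj_sym; apply: hz.
- exact: h.
Qed.

Lemma indep_restr (T T' s t : {set V}) : indep_in adj T s -> t \subset s -> t \subset T' ->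
  indep_in adj T' t.
Proof.
move=> /indepP [sT h] ts tT'; apply/indepP; split => // x y xt yt.
by apply: h; apply: (fintype.subsetP ts).
Qed.

Variables (S : {set V}) (w : V) (q : nat -> V) (k : nat).
Local Notation N := (3 * k + 1)%N.
Hypothesis wS : w \in S.
Hypothesis k1 : (0 < k)%N.
Hypothesis qS : forall i, (0 < i <= N)%N -> q i \in S.
Hypothesis qw : forall i, (0 < i <= N)%N -> q i != w.
Hypothesis qinj : forall i j, (0 < i <= N)%N -> (0 < j <= N)%N -> q i = q j -> i = j.
Hypothesis qpath : forall i, (0 < i < N)%N -> adj (q i) (q i.+1).
Hypothesis qnbr : forall i y, (0 < i <= N)%N -> y \in S -> adj (q i) y ->
  [|| adj w y, (1 < i)%N && (y == q i.-1) | (i < N)%N && (y == q i.+1)].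

Definition Kj (j : nat) : pred {set V} := fun s =>
  indep_in adj S s &&
  ((w \in s) ==> [forall i : 'I_k.+1, ((0 < i) && (i <= j))%N ==> (q (3 * i) \notin s)]).

Lemma Kj_dclosed j : dclosed (Kj j).
Proof.
move=> s t /andP[Is h] ts; apply/andP; split; first exact: indep_dclosed Is ts.
apply/implyP => wt; have /forallP h' := implyP h (fintype.subsetP ts _ wt).
apply/forallP => i; apply/implyP => hi; have := implyP (h' i) hi.
by apply: contra; apply: (fintype.subsetP ts).
Qed.


Lemma wq i : (0 < i <= N)%N -> ~~ adj (q i) w.
Proof.
move=> hi; apply/negP => a; case/or3P: (qnbr hi wS a) => [|/andP[h /eqP e]|/andP[h /eqP e]].
- by rewrite (negbTE (adj_irr w)).
- by have := qw (i := i.-1) ltac:(lia); rewrite -e eqxx.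
- by have := qw (i := i.+1) ltac:(lia); rewrite -e eqxx.
Qed.

Local Open Scope nat_scope.

Lemma Kj_forall j s i : Kj j s -> w \in s -> 0 < i <= j -> i <= k -> q (3 * i) \notin s.
Proof.
move=> /andP[_ /implyP h] ws hi ik; have /forallP /(_ (inord i)) := h ws.
by rewrite inordK ?ltnS // => /implyP; apply.
Qed.

Lemma Kj_intro j s : indep_in adj S s ->
  (w \in s -> forall i, 0 < i <= j -> i <= k -> q (3 * i) \notin s) -> Kj j s.
Proof.
move=> Is h; apply/andP; split => //; apply/implyP => ws; apply/forallP => i.
by apply/implyP => hi; apply: h => //; rewrite -ltnS.
Qed.

Lemma Kj_indep j s : Kj j s -> indep_in adj S s.
Proof. by case/andP. Qed.

Variable R : realType.

Lemma step1 j : j < k -> exists r,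
  SLr (@realization R V (Kj j)) (@realization R V (Kj j.+1)) r.
Proof.
move=> jk.
have hz : 0 < 3 * j + 1 <= N by lia.
have hu : 0 < 3 * j.+1 <= N by lia.
set z := q (3 * j + 1); set u := q (3 * j.+1).
have zu : z != u by apply/eqP => /qinj => /(_ hz hu); lia.
eexists; apply: (@form1 R V (Kj j) (Kj j.+1) u w z).
- exact: qw.
- exact: zu.
- exact: qw.
- exact: Kj_dclosed.
- exact: Kj_dclosed.
- move=> s Ks; apply: Kj_intro; first exact: Kj_indep Ks.
  by move=> ws i hi ik; apply: Kj_forall Ks ws _ ik; lia.
- move=> s Ks us ws.
  have Is := Kj_indep Ks.
  have [sS hI] := indepP _ _ Is.
  have zs : forall y, y \in s -> ~~ adj z y.
    move=> y ys; apply/negP => a.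
    case/or3P: (qnbr hz (fintype.subsetP sS _ ys) a) => [a'|/andP[h /eqP e]|/andP[h /eqP e]].
    + by have := hI _ _ ws ys; rewrite a'.
    + have := Kj_forall Ks ws (i := j) ltac:(lia) ltac:(lia).
      by move: e; rewrite addn1 /= => <-; rewrite ys.
    + have := hI _ _ ys us; rewrite e /u.
      have -> : 3 * j.+1 = (3 * j + 1).+1.+1 by lia.
      by rewrite qpath //; lia.
  have Iz : indep_in adj S (z |: s) by apply: indep_add => //; exact: qS.
  have nz : forall i, 0 < i -> i <= k -> q (3 * i) != z.
    by move=> i i0 ik; apply/eqP => /qinj e; have := e ltac:(lia) hz; lia.
  split.
    apply: Kj_intro => // _ i hi ik; rewrite !inE negb_or nz //=; last by lia.
    by apply: Kj_forall Ks ws _ ik.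
  split.
    apply: Kj_intro.
      apply: indep_restr Iz _ _.
        by apply/fintype.subsetP => x; rewrite !inE => /orP[->//|/andP[_ ->]]; rewrite orbT.
      apply/fintype.subsetP => x; rewrite !inE => /orP[/eqP->|/andP[_ xs]].
        exact: qS.
      exact: (fintype.subsetP sS).
    move=> _ i hi ik; rewrite !inE negb_or nz //=; last by lia.
    have [ij|ij] := leqP i j.
      by rewrite (negbTE (Kj_forall Ks ws _ ik)) ?andbF //; lia.
    have -> : i = j.+1 by lia.
    by rewrite -/u eqxx.
  apply: Kj_intro.
    apply: indep_restr Iz _ _.
      by apply/fintype.subsetP => x; rewrite !inE => /orP[->//|/andP[_ ->]]; rewrite orbT.
    apply/fintype.subsetP => x; rewrite !inE => /orP[/eqP->|/andP[_ xs]].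
      exact: qS.
    exact: (fintype.subsetP sS).
  by rewrite !inE eqxx /= orbF eq_sym (negbTE (qw hz)).
- move=> s Ks h; apply: Kj_intro; first exact: Kj_indep Ks.
  move=> ws i hi ik; have [ij|ij] := leqP i j.
    by apply: Kj_forall Ks ws _ ik; lia.
  have -> : i = j.+1 by lia.
  by move: h; rewrite ws andbT.
- move=> s Ks; apply/negP => /andP[us ws].
  by have := Kj_forall Ks ws (i := j.+1) ltac:(lia) ltac:(lia); rewrite us.
Qed.

Lemma step2 : exists r,
  SLr (@realization R V (Kj k)) (@realization R V (indep_in adj (S :\ w))) r.
Proof.
have hz : 0 < N <= N by lia.
set z := q N.
have zw : z != w by exact: qw.
have SwS : S :\ w \subset S by apply/fintype.subsetP => x; rewrite !inE => /andP[].
eexists; apply: (@form2 R V (Kj k) (indep_in adj (S :\ w)) w z).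
- exact: zw.
- exact: Kj_dclosed.
- exact: indep_dclosed.
- move=> s Is; have [sS _] := indepP _ _ Is.
  apply: Kj_intro; first exact: indep_restr Is (fintype.subxx _) (fintype.subset_trans sS SwS).
  by move=> ws; have := fintype.subsetP sS _ ws; rewrite !inE eqxx.
- move=> s Ks ws.
  have Is := Kj_indep Ks.
  have [sS hI] := indepP _ _ Is.
  have zs : forall y, y \in s -> ~~ adj z y.
    move=> y ys; apply/negP => a.
    case/or3P: (qnbr hz (fintype.subsetP sS _ ys) a) => [a'|/andP[h /eqP e]|/andP[h /eqP e]].
    + by have := hI _ _ ws ys; rewrite a'.
    + have := Kj_forall Ks ws (i := k) ltac:(lia) ltac:(lia).
      by move: e; rewrite addn1 /= => <-; rewrite ys.
    + by rewrite ltnn in h.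
  have Iz : indep_in adj S (z |: s) by apply: indep_add => //; exact: qS.
  have nz : forall i, 0 < i -> i <= k -> q (3 * i) != z.
    by move=> i i0 ik; apply/eqP => /qinj e; have := e ltac:(lia) hz; lia.
  split.
    apply: Kj_intro => // _ i hi ik; rewrite !inE negb_or nz /=; [|lia|lia].
    by apply: Kj_forall Ks ws _ ik.
  apply: indep_restr Iz _ _.
    by apply/fintype.subsetP => x; rewrite !inE => /orP[->//|/andP[_ ->]]; rewrite orbT.
  apply/fintype.subsetP => x; rewrite !inE => /orP[/eqP->|/andP[xw xs]].
    by rewrite zw qS.
  by rewrite xw (fintype.subsetP sS).
- move=> s Ks ws; have Is := Kj_indep Ks; have [sS _] := indepP _ _ Is.
  apply: indep_restr Is (fintype.subxx _) _.
  apply/fintype.subsetP => x xs; rewrite !inE (fintype.subsetP sS) // andbT.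
  by apply: contraNneq ws => <-.
- move=> s Is; have [sS _] := indepP _ _ Is.
  by apply/negP => ws; have := fintype.subsetP sS _ ws; rewrite !inE eqxx.
Qed.

Lemma chain d : forall j, j + d = k ->
  DR (@realization R V (Kj j)) (@realization R V (indep_in adj (S :\ w))).
Proof.
elim: d => [|d IH] j hj.
  rewrite addn0 in hj; subst j.
  have [r hr] := step2; exact: SL_DR hr.
have [r hr] := step1 (j := j) ltac:(lia).
apply: DR_step hr _; apply: IH; lia.
Qed.

Lemma main_abstract :
  homotopy_equivalent R (indep_real R adj S) (indep_real R adj (S :\ w)).
Proof.
have E0 : Kj 0 = indep_in adj S.
  apply: funext => s; rewrite /Kj; case: (indep_in adj S s) => //=.
  apply/implyP => _; apply/forallP => i; apply/implyP; lia.
apply: DR_he; rewrite /indep_real -E0; apply: (chain (d := k)); lia.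
Qed.

End Graph.

Local Open Scope nat_scope.

Ltac fin m t l :=
  repeat match goal with H : context[_ * (3 * m).-1] |- _ => revert H end;
  generalize (t * (3 * m).-1) ((t - 2) * (3 * m).-1) (l * (3 * m).-1); intros; lia.

Section Concrete.
Variables (m t : nat).
Hypotheses (m1 : 0 < m) (t2 : 1 < t).
Local Notation n := (3 * m).
Local Notation M := (3 * m).-1.

Definition code (v : Gvert n t) : nat * nat :=
  match v with
  | inl k => (0, val k)
  | inr (i, j, b) => (if b then 2 else 1, val i * M + val j)
  end.

Definition adjc (a b : nat * nat) : bool :=
  if a.1 == 0 then (b.1 != 0) && ((b.2 == a.2 * M) || (b.2.+1 == a.2 * M))
  else (a.1 == b.1) && (a.2.+1 == b.2).

Lemma dm_uniq (K i j i2 j2 : nat) : j < K -> j2 < K -> i * K + j = i2 * K + j2 ->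
  i = i2 /\ j = j2.
Proof. move=> h1 h2 e; have ei : i = i2 by nia. by subst; split => //; lia. Qed.

Lemma arith1 (i j i2 j2 : nat) : j < M -> j2 < M ->
  ((i == i2) && (j.+1 == j2) || (i.+1 == i2) && (j == n - 2) && (j2 == 0)) =
  ((i * M + j).+1 == i2 * M + j2).
Proof.
move=> hj hj2; apply/idP/idP.
  case/orP => [/andP[/eqP-> /eqP<-]|/andP[/andP[/eqP<- /eqP->] /eqP->]]; apply/eqP; nia.
move/eqP => e; case: (ltnP j.+1 M) => h.
  have ei : i = i2 by nia.
  by subst; apply/orP; left; rewrite eqxx /=; apply/eqP; lia.
have ei : i.+1 = i2 by nia.
by subst; apply/orP; right; apply/andP; split; [apply/andP; split|]; apply/eqP; nia.
Qed.

Lemma arith2 (k i j : nat) : j < M ->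
  ((k == i) && (j == 0)) || ((k == i.+1) && (j == n - 2)) =
  ((i * M + j == k * M) || ((i * M + j).+1 == k * M)).
Proof.
move=> hj; apply/idP/idP.
  case/orP => [/andP[/eqP-> /eqP->]|/andP[/eqP-> /eqP->]]; apply/orP; [left|right]; apply/eqP; nia.
case/orP => /eqP e.
  have [ek _] := @dm_uniq M i j k 0 hj ltac:(lia) ltac:(lia).
  by subst; apply/orP; left; rewrite eqxx /=; apply/eqP; nia.
case: (ltnP j.+1 M) => h.
  have [] := @dm_uniq M i j.+1 k 0 h ltac:(lia) ltac:(lia); lia.
have [ek _] := @dm_uniq M i.+1 0 k 0 ltac:(lia) ltac:(lia) ltac:(nia).
by subst; apply/orP; right; rewrite eqxx /=; apply/eqP; nia.
Qed.

Lemma Gadj0_code u v : Gadj0 u v = adjc (code u) (code v).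
Proof.
case: u => [k|[[i j] b]]; case: v => [k2|[[i2 j2] b2]] //=.
- by rewrite /adjc /=; case: b2 => /=; rewrite arith2.
- by rewrite /adjc /=; case: b.
- rewrite /adjc /= (_ : ((if b then 2 else 1) == 0) = false); last by case: b.
  rewrite -arith1 //; congr (_ && _); by case: b; case: b2.
Qed.

Lemma Gadj_code u v : Gadj u v = adjc (code u) (code v) || adjc (code v) (code u).
Proof. by rewrite /Gadj !Gadj0_code. Qed.

Lemma code_inj : injective code.
Proof.
case=> [k|[[i j] b]] [k2|[[i2 j2] b2]] //=.
- by case=> e; congr inl; apply: val_inj.
- by case: b2.
- by case: b.
- case=> eb e.
  have hj := ltn_ord j; have hj2 := ltn_ord j2.
  have [ei ej] := dm_uniq hj hj2 e.
  have -> : b = b2 by move: eb; case: b; case: b2.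
  by rewrite (val_inj ei) (val_inj ej).
Qed.

Lemma code_rng v : (code v).1 <= 2 /\ ((code v).1 == 0 -> (code v).2 <= t) /\
  ((code v).1 != 0 -> (code v).2 < t * M).
Proof.
case: v => [k|[[i j] b]] /=.
  by split => //; split => // _; rewrite -ltnS.
have hi := ltn_ord i; have hj := ltn_ord j.
split; first by case: b.
split; first by case: b.
move=> _; nia.
Qed.

Lemma code_ex c l : (c == 0) && (l <= t) || [&& 0 < c, c <= 2 & l < t * M] ->
  exists v, code v = (c, l).
Proof.
case/orP => [/andP[/eqP-> hl]|/and3P[c0 c2 hl]].
  by exists (inl (inord l)); rewrite /= inordK.
have M0 : 0 < M by move: hl; case: (M) => //; rewrite muln0.
have hi : l %/ M < t by rewrite ltn_divLR.
have hj : l %% M < M by rewrite ltn_pmod.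
exists (inr (Ordinal hi, Ordinal hj, c == 2)) => /=.
rewrite -divn_eq; congr (_, _).
by case: (c) c0 c2 => [|[|[|]]].
Qed.


Definition qcode (i : nat) : nat * nat :=
  if i < 2 * M then (1, (t - 2) * M + i)
  else if i == 2 * M then (0, t) else (2, (t - 2) * M + 4 * M - i).

Local Notation kk := (4 * m - 2).
Local Notation NN := (3 * kk + 1).

Lemma tM : t * M = (t - 2) * M + 2 * M.
Proof. by rewrite -mulnDl subnK. Qed.

Lemma hM : M = 3 * m - 1.
Proof. by rewrite -subn1. Qed.

Lemma qc1 i : i < 2 * M -> qcode i = (1, (t - 2) * M + i).
Proof. by move=> h; rewrite /qcode h. Qed.
Lemma qc0 i : i = 2 * M -> qcode i = (0, t).
Proof. by move=> ->; rewrite /qcode ltnn eqxx. Qed.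
Lemma qc2 i : 2 * M < i -> qcode i = (2, (t - 2) * M + 4 * M - i).
Proof. by move=> h; rewrite /qcode ltnNge (ltnW h) /= gtn_eqF. Qed.

Ltac qsplit i :=
  let h := fresh "h" in
  first [ (have h : i < 2 * M by lia); rewrite (qc1 h)
        | (have h : i = 2 * M by lia); rewrite (qc0 h)
        | (have h : 2 * M < i by lia); rewrite (qc2 h) ].

Ltac qsplits i :=
  have [?|?] := ltnP i.+1 (2 * M);
  [ | have [?|?] := ltnP i (2 * M);
      [ | have [?|?] := eqVneq i (2 * M);
          [ | have [?|?] := eqVneq i (2 * M).+1 ]]];
  qsplit i; try qsplit i.+1; try qsplit i.-1.

Lemma nbr_arith (i c l : nat) : 0 < i <= NN -> c <= 2 -> (c == 0 -> l <= t) ->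
  (c != 0 -> l < t * M) -> (c, l) != (0, t.-1) ->
  adjc (qcode i) (c, l) || adjc (c, l) (qcode i) ->
  [|| adjc (0, t - 2) (c, l) || adjc (c, l) (0, t - 2),
      (1 < i) && ((c, l) == qcode i.-1) | (i < NN) && ((c, l) == qcode i.+1)].
Proof.
move=> hi c2 hc0 hcn hne.
have htM := tM; have hhM := hM.
case: (eqVneq c 0) => [c0|cn0].
  subst c; have lt := hc0 (eqxx _).
  have [llt|llt] := leqP l (t - 2).
    have lM : l * M <= (t - 2) * M by rewrite leq_mul2r llt orbT.
    by qsplits i; rewrite /adjc /= ?xpair_eqE; fin m t l.
  have -> : l = t by move: hne; rewrite xpair_eqE /=; lia.
  by qsplits i; rewrite /adjc /= ?xpair_eqE; fin m t l.
have := hcn cn0.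
by qsplits i; rewrite /adjc /= (negbTE cn0) ?xpair_eqE; fin m t l.
Qed.


Definition q (i : nat) : Gvert n t := odflt (inl ord0) [pick v | code v == qcode i].

Lemma qcode_ex i : 0 < i <= NN -> exists v, code v = qcode i.
Proof.
move=> hi; have htM := tM; have hhM := hM.
have [h|h] := ltnP i (2 * M).
  rewrite (qc1 h); apply: code_ex => /=; fin m t i.
have [e|ne] := eqVneq i (2 * M).
  by rewrite (qc0 e); apply: code_ex => /=; rewrite leqnn.
have h2 : 2 * M < i by lia.
rewrite (qc2 h2); apply: code_ex => /=; fin m t i.
Qed.

Lemma code_q i : 0 < i <= NN -> code (q i) = qcode i.
Proof.
move=> hi; rewrite /q; case: pickP => [v /eqP //|none].
by have [v hv] := qcode_ex hi; have := none v; rewrite hv eqxx.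
Qed.

Lemma yq j y : 0 < j <= NN -> (y == q j) = (code y == qcode j).
Proof. by move=> hj; rewrite -code_q // (inj_eq code_inj). Qed.

Lemma code_avert k : k <= t -> code (avert n t k) = (0, k).
Proof. by move=> hk; rewrite /= inordK. Qed.

End Concrete.

Ltac qsplit m t i :=
  let h := fresh "h" in
  first [ (have h : i < 2 * (3 * m).-1 by lia); rewrite (qc1 t h)
        | (have h : i = 2 * (3 * m).-1 by lia); rewrite (qc0 t h)
        | (have h : 2 * (3 * m).-1 < i by lia); rewrite (qc2 t h) ].

Ltac qsplits m t i :=
  have [?|?] := ltnP i.+1 (2 * (3 * m).-1);
  [ | have [?|?] := ltnP i (2 * (3 * m).-1);
      [ | have [?|?] := eqVneq i (2 * (3 * m).-1);
          [ | have [?|?] := eqVneq i (2 * (3 * m).-1).+1 ]]];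
  qsplit m t i; try qsplit m t i.+1; try qsplit m t i.-1.



Theorem lemma3p13 (R : realType) (m t : nat) :
  (1 <= m)%N -> (2 <= t)%N ->
  homotopy_equivalent R
    (indep_real R (@Gadj (3 * m) t) (del1 (avert (3 * m) t t.-1)))
    (indep_real R (@Gadj (3 * m) t)
       (del2 (avert (3 * m) t t.-1) (avert (3 * m) t (t - 2)))).
Proof.
move=> m1 t2.
set a := avert (3 * m) t t.-1; set b := avert (3 * m) t (t - 2).
have -> : del2 a b = del1 a :\ b by apply/setP => x; rewrite !inE andbC.
have ca : code a = (0, t.-1) by rewrite code_avert //; lia.
have cb : code b = (0, t - 2) by rewrite code_avert //; lia.
have htM := tM m t2; have hhM := hM m.
apply: (@main_abstract _ (@Gadj (3 * m) t) _ _ (del1 a) b (q m t) (4 * m - 2)).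
- by move=> x y; rewrite /Gadj orbC.
- move=> x; rewrite Gadj_code // orbb /adjc; case: (code x) => c l /=.
  by case: c => [|c] //=; apply/negP => /andP[_ /eqP]; lia.
- rewrite /del1 !inE; apply/eqP => /(congr1 (@code m t)); rewrite ca cb; case; lia.
- lia.
- move=> i hi; rewrite /del1 !inE; apply/eqP => /(congr1 (@code m t)); rewrite ca code_q //.
  by qsplits m t i; case; lia.
- move=> i hi; apply/eqP => /(congr1 (@code m t)); rewrite cb code_q //.
  by qsplits m t i; case; lia.
- move=> i j hi hj /(congr1 (@code m t)); rewrite !code_q //.
  by qsplits m t i; qsplits m t j; move=> /eqP; rewrite xpair_eqE; fin m t i.
- move=> i hi; rewrite Gadj_code // !code_q //; try lia.
  by qsplits m t i; rewrite /adjc /=; fin m t i.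
- move=> i y hi yS a'.
  rewrite Gadj_code // code_q // in a'.
  rewrite Gadj_code // cb.
  have yS' : code y != (0, t.-1).
    by rewrite -ca (inj_eq (@code_inj m t m1 t2)); move: yS; rewrite /del1 !inE.
  have hl : (1 < i) && (y == q m t i.-1) = (1 < i) && (code y == qcode m t i.-1).
    by case: (ltnP 1 i) => h //=; rewrite yq //; lia.
  have hr : (i < 3 * (4 * m - 2) + 1) && (y == q m t i.+1) =
            (i < 3 * (4 * m - 2) + 1) && (code y == qcode m t i.+1).
    by case: (ltnP i (3 * (4 * m - 2) + 1)) => h //=; rewrite yq //; lia.
  rewrite hl hr.
  have [r1 [r2 r3]] := code_rng m1 t2 y.
  move: (code y) r1 r2 r3 yS' a' => [c l] /= r1 r2 r3 yS' a'.
  exact: nbr_arith.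
Qed.
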